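(* Fix $L\in\mathbb Z$ and work on $Y_L=\mathbb R\times(0,2^L]\times\mathbb R$ with the objects described in the context. The quadruple $(Y_L,\mu,\nu,\mathcal C)$, where $\mathcal C(A)=\mathcal M(\mathcal N(\mathcal Q(A)))$ and $\mathcal E=\mathcal D_L$, satisfies the canopy condition for every choice of parameters $\Phi,K\ge2$.
   Context: Dyadic intervals $I(m,l)=(2^lm,2^l(m+1)]$; tiles $H(m,l,n)=I(m,l)\times(2^{l-1},2^l]\times I(n,-l)$. $\mathcal D_L$ = strips $D(m,l)=I(m,l)\times(0,2^l]\times\mathbb R$ with $l\le L$, $\sigma(D(m,l))=2^l$. $\mathcal T_L$ = trees $T(m,l,n)=\bigcup_{l'\le l}\bigcup_{m':\,I(m',l')\subseteq I(m,l)}H(m',l',N(n,l'))$ with $l\le L$ ($N(n,l')$ the integer with $I(n,-l)\subseteq I(N(n,l'),-l')$), $\tau(T(m,l,n))=2^l$. Outer measures on $Y_L$: $\mu(A)=\inf\{\sum_{S\in\mathcal S'}\sigma(S):\mathcal S'\subseteq\mathcal D_L,A\subseteq\bigcup\mathcal S'\}$, $\nu$ likewise from $(\mathcal T_L,\tau)$. $\pi$ = projection onto first coordinate, $|\cdot|$ Lebesgue measure. For $E\in\mathcal D_L$, $E_+=\{(x,s,\xi)\in E:s>\sigma(E)/2\}$. $\mathcal Q(A)=\{E\in\mathcal D_L:E_+\cap A\ne\varnothing\}$. For $\mathcal D_1\subseteq\mathcal D_L$: $\mathcal N(\mathcal D_1)=\{E\in\mathcal D_L:|\pi(E)\cap\pi(\bigcup\mathcal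 D_1)|\ge|\pi(E)|/2\}$; $\mathcal M(\mathcal D_1)$ = elements of $\mathcal D_1$ maximal under inclusion. $\mathbf B_{\mathcal C}(A)=\bigcup_{E\in\mathcal C(A)}E$. A $\mu$-covering function with parameter $\Phi$: a map $\mathcal C$ assigning to each $A$ a subcollection of pairwise disjoint elements of $\mathcal E$ with $A\subseteq\mathbf B_{\mathcal C}(A)$, $\mu(\mathbf B_{\mathcal C}(A))\le\Phi\mu(A)$, $\mathbf B_{\mathcal C}$ monotone. A collection $\mathcal A$ of pairwise disjoint sets is $\nu$-Carathéodory (parameter $K$) if $\sum_{A\in\mathcal A}\nu(U\cap A)\le K\nu(U\cap\bigcup\mathcal A)$ for all $U$. Canopy condition (parameters $\Phi,K$): $\mathcal C$ is a $\mu$-covering function with parameter $\Phi$, and for every $\nu$-Carathéodory collection $\mathcal A$ (parameter $K$) and every $D$ disjoint from $\mathbf B_{\mathcal C}(\bigcup_{A\in\mathcal A}A)$, $\mathcal A\cup\{D\}$ is $\nu$-Carathéodory (parameter $K$). *)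

(* Defs.v *)
From HB Require Import structures.
From mathcomp Require Import all_boot all_order all_algebra.
From mathcomp Require Import all_classical all_reals all_analysis.
Set Implicit Arguments.
Unset Strict Implicit.
Unset Printing Implicit Defensive.
Import Order.TTheory GRing.Theory Num.Theory.
Local Open Scope classical_set_scope.
Local Open Scope ring_scope.

Section Defs.
Variable R : realType.

(* points (x, s, xi) of R x R x R *)
Definition pt := (R * R * R)%type.

Definition proj1 (p : pt) : R := p.1.1.

Definition YL (L : int) : set pt :=
  [set p | 0 < p.1.2 /\ p.1.2 <= (2:R) ^ L].

Definition dyI (m l : int) : set R :=
  [set x | (2:R) ^ l * m%:~R < x /\ x <= (2:R) ^ l * (m + 1)%:~R].

Definition tile (m l n : int) : set pt :=
  [set p | dyI m l p.1.1 /\ (2:R) ^ (l - 1) < p.1.2 /\ p.1.2 <= (2:R) ^ l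
           /\ dyI n (- l) p.2].

Definition strip (m l : int) : set pt :=
  [set p | dyI m l p.1.1 /\ 0 < p.1.2 /\ p.1.2 <= (2:R) ^ l].

Definition strip_plus (m l : int) : set pt :=
  [set p | strip m l p /\ (2:R) ^ l / 2 < p.1.2].

Definition tree (m l n : int) : set pt :=
  [set p | exists l' m' N, l' <= l /\ dyI m' l' `<=` dyI m l /\
           dyI n (- l) `<=` dyI N (- l') /\ tile m' l' N p].

Definition stripsL (L : int) : set (set pt) :=
  [set E | exists m l, l <= L /\ E = strip m l].

Definition mu_out (L : int) (A : set pt) : \bar R :=
  ereal_inf [set s | exists J : set (int * int),
     (forall j, J j -> j.2 <= L) /\
     A `<=` \bigcup_(j in J) strip j.1 j.2 /\
     s = (\esum_(j in J) ((2:R) ^ j.2)%:E)%E].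

Definition nu_out (L : int) (A : set pt) : \bar R :=
  ereal_inf [set s | exists J : set (int * int * int),
     (forall j, J j -> j.1.2 <= L) /\
     A `<=` \bigcup_(j in J) tree j.1.1 j.1.2 j.2 /\
     s = (\esum_(j in J) ((2:R) ^ j.1.2)%:E)%E].

Definition Qcoll (L : int) (A : set pt) : set (set pt) :=
  [set E | exists m l, l <= L /\ E = strip m l /\ strip_plus m l `&` A !=set0].

Definition Ncoll (L : int) (D1 : set (set pt)) : set (set pt) :=
  [set E | stripsL L E /\
     (lebesgue_measure (proj1 @` E) * (2^-1)%:E <=
      lebesgue_measure (proj1 @` E `&` proj1 @` (\bigcup_(F in D1) F)))%E].

Definition Mcoll (D1 : set (set pt)) : set (set pt) :=
  [set E | D1 E /\ forall F, D1 F -> E `<=` F -> F = E].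

Definition Ccov (L : int) (A : set pt) : set (set pt) :=
  Mcoll (Ncoll L (Qcoll L A)).

Definition Bcov (C : set pt -> set (set pt)) (A : set pt) : set pt :=
  \bigcup_(E in C A) E.

Definition pairwise_disjoint (Ac : set (set pt)) : Prop :=
  forall E F, Ac E -> Ac F -> E <> F -> E `&` F = set0.

Definition covering_function (Y : set pt) (mu : set pt -> \bar R)
    (Ecoll : set (set pt)) (C : set pt -> set (set pt)) (Phi : R) : Prop :=
  (forall A, A `<=` Y ->
     C A `<=` Ecoll /\ pairwise_disjoint (C A) /\
     A `<=` Bcov C A /\
     (mu (Bcov C A) <= Phi%:E * mu A)%E) /\
  (forall A A', A `<=` A' -> A' `<=` Y -> Bcov C A `<=` Bcov C A').

Definition caratheodory (Y : set pt) (nu : set pt -> \bar R)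
    (Ac : set (set pt)) (K : R) : Prop :=
  (forall E, Ac E -> E `<=` Y) /\ pairwise_disjoint Ac /\
  forall U, U `<=` Y ->
    (\esum_(E in Ac) nu (U `&` E) <= K%:E * nu (U `&` \bigcup_(E in Ac) E))%E.

Definition canopy (Y : set pt) (mu nu : set pt -> \bar R)
    (Ecoll : set (set pt)) (C : set pt -> set (set pt)) (Phi K : R) : Prop :=
  covering_function Y mu Ecoll C Phi /\
  forall (Ac : set (set pt)) (D : set pt),
    caratheodory Y nu Ac K -> D `<=` Y ->
    D `&` Bcov C (\bigcup_(E in Ac) E) = set0 ->
    caratheodory Y nu (Ac `|` [set D]) K.

End Defs.

(* Main.v *)
Require Import Defs.
From HB Require Import structures.
From mathcomp Require Import all_boot all_order all_algebra.
From mathcomp Require Import all_classical all_reals all_analysis.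
From mathcomp Require Import zify ring lra.
Import Order.TTheory GRing.Theory Num.Theory.
Local Open Scope classical_set_scope.
Local Open Scope ring_scope.

Section Dyadic.
Context {R : realType}.
Local Notation dyI := (@dyI R).
Local Notation strip := (@strip R).

Lemma p2_gt0 (l : int) : 0 < (2:R) ^ l.
Proof. by apply: exprz_gt0. Qed.

Lemma p2_le (l l' : int) : (l <= l') = ((2:R) ^ l <= 2 ^ l').
Proof. by rewrite (ler_eXz2l (x:=(2:R)))//; lra. Qed.

Lemma p2_lt (l l' : int) : (l < l') = ((2:R) ^ l < 2 ^ l').
Proof. by rewrite (ltr_eXz2l (x:=(2:R)))//; lra. Qed.

Lemma p2D (l : int) (n : nat) : (2:R) ^ (l + n%:Z) = 2 ^ l * ((2 ^ n)%N%:Z)%:~R.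
Proof.
have h2 : (2:R) != 0 by apply: lt0r_neq0; lra.
rewrite expfzDr //; congr (_ * _).
rewrite -exprnP; change ((2%:R)^+n = (2^n)%:R :> R); by rewrite natrX.
Qed.

Lemma dyIE (m l : int) (x : R) :
  dyI m l x <-> (2:R) ^ l * m%:~R < x /\ x <= 2 ^ l * m%:~R + 2 ^ l.
Proof. by rewrite /dyI /= intrD mulrDr mulr1. Qed.

Lemma dyI_top (m l : int) : dyI m l ((2:R) ^ l * (m + 1)%:~R).
Proof.
apply/dyIE; rewrite intrD mulrDr mulr1; split => //.
by rewrite ltrDl p2_gt0.
Qed.

Lemma dyI_nest (m l m' l' : int) (x : R) : l <= l' ->
  dyI m l x -> dyI m' l' x -> dyI m l `<=` dyI m' l'.
Proof.
move=> ll' /dyIE [h1 h2] /dyIE [h3 h4] y /dyIE [h5 h6]; apply/dyIE.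
have [n En] : exists n : nat, l' = l + n%:Z by exists `|l' - l|%N; lia.
subst l'.
rewrite p2D in h3 h4 *.
set t := (2:R) ^ l in h1 h2 h5 h6 h3 h4 *.
have t0 : 0 < t := p2_gt0 l.
set P := ((2 ^ n)%N%:Z) in h3 h4 *.
have e1 : t * P%:~R * m'%:~R = t * (P * m')%:~R by rewrite intrM mulrA.
have e2 : t * P%:~R * m'%:~R + t * P%:~R = t * (P * m' + P)%:~R.
  by rewrite intrD intrM mulrDr mulrA.
rewrite e2 e1; rewrite e2 in h4; rewrite e1 in h3.
have H1 : m < P * m' + P.
  by rewrite -(ltr_int R) -(ltr_pM2l t0); apply: (lt_le_trans h1).
have H2 : P * m' < m + 1.
  rewrite -(ltr_int R) -(ltr_pM2l t0) intrD mulrDr mulr1.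
  by apply: (lt_le_trans h3).
split.
  apply: le_lt_trans h5; rewrite ler_pM2l // ler_int; lia.
apply: (le_trans h6).
have -> : t * m%:~R + t = t * (m + 1)%:~R by rewrite intrD mulrDr mulr1.
rewrite ler_pM2l // ler_int; lia.
Qed.

Arguments dyI_nest {m l m' l' x}.

Lemma dyI_endpts (m l m' l' : int) : dyI m l `<=` dyI m' l' ->
  (2:R) ^ l' * m'%:~R <= 2 ^ l * m%:~R /\
  (2:R) ^ l * m%:~R + 2 ^ l <= 2 ^ l' * m'%:~R + 2 ^ l'.
Proof.
move=> sub.
have t0 := p2_gt0 l.
have /sub /dyIE [_ hT] := dyI_top m l.
rewrite intrD mulrDr mulr1 in hT.
split => //.
rewrite leNgt; apply/negP => H.
have [H2|H2] := leP ((2:R) ^ l' * m'%:~R) (2 ^ l * m%:~R + 2 ^ l).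
  have hh : dyI m l (2 ^ l' * m'%:~R) by apply/dyIE.
  have [h _] := (dyIE _ _ _).1 (sub _ hh).
  by move: h; rewrite ltxx.
have hh : dyI m l (2 ^ l * m%:~R + 2 ^ l).
  by apply/dyIE; split => //; rewrite ltrDl.
have [h _] := (dyIE _ _ _).1 (sub _ hh).
by move: (lt_trans h H2); rewrite ltxx.
Qed.

Lemma dyI_sub_le (m l m' l' : int) : dyI m l `<=` dyI m' l' -> l <= l'.
Proof.
move=> /dyI_endpts [h1 h2]; rewrite p2_le; lra.
Qed.

Arguments dyI_sub_le {m l m' l'}.

Lemma dyI_same (m l m' : int) : dyI m l `<=` dyI m' l -> m = m'.
Proof.
move=> /dyI_endpts [h1 h2].
have t0 := p2_gt0 l.
have a : m' <= m by rewrite -(ler_int R) -(ler_pM2l t0).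
have b : m <= m'.
  by rewrite -(ler_int R) -(ler_pM2l t0); rewrite lerD2r in h2.
by apply/eqP; rewrite eq_le a b.
Qed.

Arguments dyI_same {m l m'}.

Lemma dyI_cover (l : int) (x : R) : exists m, dyI m l x.
Proof.
have t0 := p2_gt0 l.
exists (Num.ceil (x / 2 ^ l) - 1); apply/dyIE.
have h1 := ceilB1_lt (x / 2 ^ l).
have h2 := ceil_ge (x / 2 ^ l).
split.
  by rewrite mulrC -ltr_pdivlMr.
rewrite intrB mulrBr mulr1 subrK mulrC -ler_pdivrMr //.
Qed.

Lemma dyI_parent (m l l' : int) : l <= l' -> exists M, dyI m l `<=` dyI M l'.
Proof.
move=> ll'.
have [M hM] := dyI_cover l' (2 ^ l * (m + 1)%:~R).
by exists M; apply: (dyI_nest ll' (dyI_top m l) hM).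
Qed.

Lemma dyI_inter (m l m' l' : int) (x : R) : dyI m l x -> dyI m' l' x ->
  dyI m l `<=` dyI m' l' \/ dyI m' l' `<=` dyI m l.
Proof.
move=> h1 h2; have [ll'|ll'] := leP l l'.
  by left; apply: dyI_nest h1 h2.
by right; apply: (dyI_nest (ltW ll') h2 h1).
Qed.

Arguments dyI_inter {m l m' l' x}.

Lemma stripE (m l : int) (p : pt R) :
  strip m l p <-> dyI m l p.1.1 /\ 0 < p.1.2 /\ p.1.2 <= 2 ^ l.
Proof. by []. Qed.

Lemma strip_sub (m l m' l' : int) :
  strip m l `<=` strip m' l' <-> dyI m l `<=` dyI m' l'.
Proof.
split.
  move=> sub x hx.
  have /sub [] : strip m l (x, 2 ^ l, 0) by split => //=; split => //; apply: p2_gt0.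
  by [].
move=> sub p [h1 [h2 h3]]; split; first exact: sub.
split => //; apply: (le_trans h3); rewrite -p2_le; exact: dyI_sub_le sub.
Qed.

Arguments strip_sub {m l m' l'}.

Lemma strip_inj (m l m' l' : int) : strip m l = strip m' l' -> m = m' /\ l = l'.
Proof.
move=> e.
have s1 : dyI m l `<=` dyI m' l' by apply/strip_sub; rewrite e.
have s2 : dyI m' l' `<=` dyI m l by apply/strip_sub; rewrite e.
have ll : l = l'.
  by apply/eqP; rewrite eq_le (dyI_sub_le s1) (dyI_sub_le s2).
by subst l'; split => //; apply: dyI_same s1.
Qed.

Lemma strip_inter (m l m' l' : int) (p : pt R) : strip m l p -> strip m' l' p ->
  strip m l `<=` strip m' l' \/ strip m' l' `<=` strip m l.
Proof.
move=> [h1 _] [h2 _].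
by case: (dyI_inter h1 h2) => h; [left|right]; apply/strip_sub.
Qed.

Arguments strip_inter {m l m' l' p}.
Arguments strip_inj {m l m' l'}.

Lemma proj_strip (m l : int) : (@proj1 R) @` strip m l = dyI m l.
Proof.
apply/seteqP; split.
  by move=> x [p [hp _] <-].
move=> x hx; exists (x, 2 ^ l, 0) => //.
by split => //=; split => //; apply: p2_gt0.
Qed.

Lemma p2_small (s : R) : 0 < s -> exists l : int, (2:R) ^ l < s.
Proof.
move=> s0.
set k := `|Num.ceil s^-1|%N.
have h1 : s^-1 <= k%:R.
  apply: (le_trans (ceil_ge _)).
  have -> : (k%:R : R) = (k%:Z)%:~R by [].
  by rewrite ler_int /k abszE; apply: ler_norm.
have h2 : (k%:R : R) < 2 ^ k%:Z.
  rewrite -exprnP -natrX ltr_nat; exact: ltn_expl.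
have h3 : s^-1 < 2 ^ k%:Z := le_lt_trans h1 h2.
exists (- k%:Z).
have e : (2:R) ^ (- k%:Z) * 2 ^ k%:Z = 1.
  by rewrite -expfzDr ?addNr ?expr0z //; apply: lt0r_neq0; lra.
have p0 := p2_gt0 (- k%:Z).
have q0 := p2_gt0 k%:Z.
rewrite -(ltr_pM2r q0) e.
have si : 0 < s^-1 by rewrite invr_gt0.
rewrite -(ltr_pM2l si) mulr1 mulrA mulVf ?mul1r //.
by apply: lt0r_neq0.
Qed.

Lemma level_exists (L : int) (s : R) : 0 < s -> s <= 2 ^ L ->
  exists l, l <= L /\ (2:R) ^ (l - 1) < s /\ s <= 2 ^ l.
Proof.
move=> s0 sL.
have [l0 hl0] := p2_small s s0.
have l0L : l0 <= L by rewrite p2_le; apply: ltW; apply: lt_le_trans sL.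
suff H : forall n : nat, s <= 2 ^ (l0 + n%:Z) ->
    exists l, l <= l0 + n%:Z /\ (2:R) ^ (l - 1) < s /\ s <= 2 ^ l.
  have [|l [h1 h2]] := H `|L - l0|%N.
    by have -> : l0 + (`|L - l0|%N)%:Z = L by lia.
  by exists l; split => //; lia.
elim => [|n IH].
  rewrite addr0 => h; by move: (lt_le_trans hl0 h); rewrite ltxx.
move=> h.
have [h'|h'] := leP s (2 ^ (l0 + n%:Z)).
  by have [l [a b]] := IH h'; exists l; split => //; lia.
exists (l0 + n.+1%:Z); split => //; split => //.
by have -> : l0 + n.+1%:Z - 1 = l0 + n%:Z by lia.
Qed.

Arguments level_exists {L s}.

Lemma strip_sub_lt (m l m' l' : int) : strip m l `<=` strip m' l' ->
  strip m' l' <> strip m l -> l < l'.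
Proof.
move=> /strip_sub sub ne.
have le := dyI_sub_le sub.
rewrite lt_neqAle le andbT; apply/negP => /eqP e; subst l'.
by apply: ne; rewrite (dyI_same sub).
Qed.

Arguments strip_sub_lt {m l m' l'}.

Lemma max_exists (L : int) (S : set (set (pt R))) : S `<=` stripsL L ->
  forall E, S E -> exists F, Mcoll S F /\ E `<=` F.
Proof.
move=> SL.
suff H : forall n : nat, forall m l, l <= L -> L - l <= n%:Z -> S (strip m l) ->
    exists F, Mcoll S F /\ strip m l `<=` F.
  move=> E SE; have [m [l [lL eE]]] := SL _ SE; subst E.
  by apply: (H `|L - l|%N) => //; lia.
elim => [|n IH] m l lL ln Sml.
  have [[F [SF [sub ne]]]|no] :=
    pselect (exists F, S F /\ strip m l `<=` F /\ F <> strip m l).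
    have [m' [l' [l'L eF]]] := SL _ SF; subst F.
    exfalso; have := strip_sub_lt sub ne; lia.
  exists (strip m l); split => //; split => // F SF sub.
  by apply: contrapT => ne; apply: no; exists F.
have [[F [SF [sub ne]]]|no] :=
  pselect (exists F, S F /\ strip m l `<=` F /\ F <> strip m l).
  have [m' [l' [l'L eF]]] := SL _ SF; subst F.
  have lt := strip_sub_lt sub ne.
  have [|F [MF sF]] := IH m' l' l'L _ SF; first lia.
  by exists F; split => //; apply: subset_trans sF.
exists (strip m l); split => //; split => // F SF sub.
by apply: contrapT => ne; apply: no; exists F.
Qed.

Lemma Mcoll_disj (L : int) (S : set (set (pt R))) : S `<=` stripsL L ->
  pairwise_disjoint (Mcoll S).
Proof.
move=> SL E F [SE ME] [SF MF] ne.
apply/seteqP; split => // p [pE pF].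
have [m [l [_ eE]]] := SL _ SE; have [m' [l' [_ eF]]] := SL _ SF; subst E F.
case: (strip_inter pE pF) => sub.
  by apply: ne; symmetry; apply: ME.
by apply: ne; apply: MF.
Qed.

End Dyadic.
Arguments level_exists {R L s}.
Arguments dyI_nest {R m l m' l' x}.
Arguments dyI_inter {R m l m' l' x}.
Arguments dyI_sub_le {R m l m' l'}.
Arguments dyI_same {R m l m'}.
Arguments strip_sub_lt {R m l m' l'}.
Arguments strip_sub {R m l m' l'}.
Arguments strip_inter {R m l m' l' p}.
Arguments strip_inj {R m l m' l'}.
Arguments max_exists {R L S}.
Arguments Mcoll_disj {R L S}.


Section Meas.
Variable R : realType.
Local Notation lam := (@lebesgue_measure R).
Local Notation dyI := (@dyI R).

Definition enc (T : countType) (t0 : T) (n : nat) : T := odflt t0 (unpickle n).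

Arguments enc {T}.

Lemma enc_img (T : countType) (t0 : T) (D : set T) :
  D = enc t0 @` (pickle @` D).
Proof.
apply/seteqP; split.
  by move=> x Dx; exists (pickle x); [exists x|rewrite /enc pickleK].
by move=> _ [_ [x Dx <-] <-]; rewrite /enc pickleK.
Qed.

Arguments enc_img {T}.

Lemma enc_inj (T : countType) (t0 : T) (D : set T) :
  set_inj (pickle @` D) (enc t0).
Proof.
move=> a b /set_mem [x _ <-] /set_mem [y _ <-].
by rewrite /enc !pickleK /= => ->.
Qed.

Arguments enc_inj {T}.

Lemma esum_nat (T : countType) (t0 : T) (D : set T) (a : T -> \bar R) :
  (forall x, D x -> (0 <= a x)%E) ->
  \esum_(i in D) a i = (\sum_(n <oo | n \in pickle @` D) a (enc t0 n))%E.
Proof.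
move=> a0; rewrite {1}(enc_img t0 D) esum_set_image //.
- by move=> _ [x Dx <-]; rewrite /enc pickleK; apply: a0.
- exact: enc_inj.
Qed.

Arguments esum_nat {T}.

Lemma bigcup_nat (T : countType) (t0 : T) (D : set T) (F : T -> set R) :
  \bigcup_(i in D) F i = \bigcup_(n in pickle @` D) F (enc t0 n).
Proof.
apply/seteqP; split.
  by move=> x [i Di Fx]; exists (pickle i); [exists i|rewrite /enc pickleK].
by move=> x [_ [i Di <-]]; rewrite /enc pickleK => Fx; exists i.
Qed.

Arguments bigcup_nat {T}.

Lemma meas_bigcup (T : countType) (D : set T) (F : T -> set R) :
  (forall i, D i -> measurable (F i)) -> measurable (\bigcup_(i in D) F i).
Proof.
move=> mF.
have [D0|/set0P [t0 _]] := eqVneq D set0.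
  rewrite D0 bigcup_set0; exact: measurable0.
rewrite (bigcup_nat t0); apply: bigcup_measurable.
by move=> _ [i Di <-]; rewrite /enc pickleK; apply: mF.
Qed.

Lemma lam_bigcup (T : countType) (D : set T) (F : T -> set R) :
  (forall i, D i -> measurable (F i)) ->
  (forall i j, D i -> D j -> i <> j -> F i `&` F j = set0) ->
  lam (\bigcup_(i in D) F i) = \esum_(i in D) lam (F i).
Proof.
move=> mF dF.
have [D0|/set0P [t0 _]] := eqVneq D set0.
  by rewrite D0 bigcup_set0 measure0 esum_set0.
rewrite (bigcup_nat t0) (esum_nat t0); last by move=> *; apply: measure_ge0.
apply: measure_bigcup.
  by move=> _ [i Di <-]; rewrite /enc pickleK; apply: mF.
move=> _ _ [i Di <-] [j Dj <-]; rewrite /enc !pickleK /= => ne.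
have [e|e] := pselect (i = j); first by rewrite e.
by move: ne; rewrite dF // => /set0P; rewrite eqxx.
Qed.

Lemma lam_sub (T : countType) (D : set T) (F : T -> set R) (X : set R) :
  (forall i, D i -> measurable (F i)) -> measurable X ->
  X `<=` \bigcup_(i in D) F i ->
  (lam X <= \esum_(i in D) lam (F i))%E.
Proof.
move=> mF mX sX.
have [D0|/set0P [t0 _]] := eqVneq D set0.
  subst D; rewrite bigcup_set0 in sX.
  by move: sX; rewrite subset0 => ->; rewrite esum_set0 measure0.
rewrite (esum_nat t0); last by move=> *; apply: measure_ge0.
rewrite (bigcup_nat t0) bigcup_mkcond in sX.
pose G n := if n \in pickle @` D then F (enc t0 n) else set0.
have mG : forall n, measurable (G n).
  move=> n; rewrite /G; case: ifPn => [/set_mem [i Di <-]|_].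
    by rewrite /enc pickleK; apply: mF.
  exact: measurable0.
have := @measure_sigma_subadditive _ _ _ lam X G mG mX sX.
move=> /le_trans; apply.
rewrite [X in (_ <= X)%E]eseries_mkcond; apply: lee_nneseries => [n _ _|n _].
  exact: measure_ge0.
by rewrite /G; case: ifP => // _; rewrite measure0.
Qed.

Lemma dyI_itv (m l : int) :
  dyI m l = `](2 ^ l * m%:~R), (2 ^ l * (m + 1)%:~R)]%classic.
Proof.
apply/seteqP; split => x; rewrite /= in_itv /=.
  by move=> [h1 h2]; apply/andP.
by move=> /andP.
Qed.

Lemma dyI_meas (m l : int) : measurable (dyI m l).
Proof. by rewrite dyI_itv; apply: measurable_itv. Qed.

Lemma lam_dyI (m l : int) : lam (dyI m l) = ((2:R) ^ l)%:E.
Proof.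
rewrite dyI_itv lebesgue_measure_itv /= lte_fin.
have t0 := @p2_gt0 R l.
rewrite intrD mulrDr mulr1 ltrDl t0 -EFinB; congr (_%:E); ring.
Qed.

End Meas.

Lemma esum_sub (R : realType) (T : choiceType) (D D' : set T) (a : T -> \bar R) :
  D' `<=` D -> (forall x, D x -> (0 <= a x)%E) ->
  (\esum_(i in D') a i <= \esum_(i in D) a i)%E.
Proof.
move=> sub a0; rewrite esum_mkcond [X in (_ <= X)%E]esum_mkcond.
apply: le_esum => i _; case: ifPn => [/set_mem /sub Di|_].
  by rewrite ifT ?inE.
by case: ifPn => // /set_mem /a0.
Qed.

Lemma arith1 (R : realType) (x w ci h co : \bar R) :
  (0 <= x)%E -> (0 <= w)%E -> (0 <= ci)%E -> (0 <= h)%E ->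
  (x <= ci + h)%E -> (w <= co)%E -> (h + h <= co)%E ->
  (x + w * (2^-1)%:E <= ci + co)%E.
Proof.
move=> x0 w0 c0 h0 hx hw hh.
case: co hw hh => [co| |] hw hh; last by move: (le_trans w0 hw).
  2: by rewrite addey ?leey //; move: c0 {hx}; case: ci.
case: h h0 hx hh => [h| |] //= h0 hx hh.
case: w w0 hw => [w| |] //= w0 hw.
case: ci c0 hx => [ci| |] //= c0 hx; last by rewrite addye ?leey.
case: x x0 hx => [x| |] //= x0 hx.
have x0' : 0 <= x := x0. have w0' : 0 <= w := w0.
have c0' : 0 <= ci := c0. have h0' : 0 <= h := h0.
move: hx hw hh; rewrite -EFinM -!EFinD !lee_fin.
lra.
Qed.

Lemma arith2 (R : realType) (K : R) (s x w y : \bar R) : 2 <= K ->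
  (0 <= s)%E -> (0 <= x)%E -> (0 <= w)%E ->
  (s <= K%:E * x)%E -> (x + w * (2^-1)%:E <= y)%E -> (s + w <= K%:E * y)%E.
Proof.
move=> K2 s0 x0 w0 hs hy.
have w2 : (0 <= w * (2^-1)%:E)%E by apply: mule_ge0 => //; rewrite lee_fin; lra.
case: y hy => [y| |] hy.
- case: x x0 hs hy => [x| |] //= x0 hs hy; last first.
    by move: hy; rewrite addye //; case: (w * _)%E w2.
  case: w w0 w2 hy => [w| |] //= w0 w2 hy; last first.
    have e : (+oo * (2^-1)%:E = +oo :> \bar R)%E.
      by rewrite mulyr gtr0_sg ?mul1e // invr_gt0; lra.
    by move: hy; rewrite e addey.
  case: s s0 hs => [s| |] //= s0 hs.
  have x0' : 0 <= x := x0. have w0' : 0 <= w := w0. have s0' : 0 <= s := s0.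
  move: hs hy; rewrite -!EFinM -!EFinD !lee_fin.
  nra.
- by rewrite mulry gtr0_sg ?mul1e ?leey //; lra.
- by move: (le_trans (adde_ge0 x0 w2) hy).
Qed.

Section Main.
Variable R : realType.
Variable L : int.
Local Notation lam := (@lebesgue_measure R).
Local Notation dyI := (@dyI R).
Local Notation strip := (@strip R).
Local Notation Q := (@Qcoll R L).
Local Notation N := (@Ncoll R L).
Local Notation C := (@Ccov R L).

Definition JQ (A : set (pt R)) : set (int * int) := [set j | Q A (strip j.1 j.2)].
Definition PQ (A : set (pt R)) : set R := (@proj1 R) @` \bigcup_(F in Q A) F.

Lemma PQ_eq A : PQ A = \bigcup_(j in JQ A) dyI j.1 j.2.
Proof.
apply/seteqP; split.
  move=> _ [p [F QF Fp] <-].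
  have [m [l [lL [eF _]]]] := QF; subst F.
  by exists (m, l) => //; case: Fp.
move=> x [[m l] /= Qml hx].
exists (x, 2 ^ l, 0) => //; exists (strip m l) => //.
by split => //=; split => //; apply: p2_gt0.
Qed.

Lemma PQ_meas A : measurable (PQ A).
Proof. by rewrite PQ_eq; apply: meas_bigcup => j _; apply: dyI_meas. Qed.

Lemma stripsL_strip m l : stripsL L (strip m l) <-> l <= L.
Proof.
split; last by move=> lL; exists m, l.
by move=> [m' [l' [l'L /strip_inj [_ ->]]]].
Qed.

Lemma N_strip A m l : N (Q A) (strip m l) <->
  l <= L /\ (((2:R) ^ l)%:E * (2^-1)%:E <= lam (dyI m l `&` PQ A))%E.
Proof.
rewrite /Ncoll /= proj_strip lam_dyI.
split; move=> [h1 h2]; split => //.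
  exact: (stripsL_strip m l).1 h1.
exact: (stripsL_strip m l).2 h1.
Qed.

Lemma p2_half (l : int) : (2:R) ^ (l - 1) = 2 ^ l / 2.
Proof.
rewrite expfzDr ?exprN1 ?expr1z //; apply: lt0r_neq0; lra.
Qed.

Lemma NQ_stripsL A : N (Q A) `<=` stripsL L.
Proof. by move=> E []. Qed.

Lemma C_sub_N A : C A `<=` N (Q A).
Proof. by move=> E []. Qed.

Lemma cover_A A : A `<=` YL L -> A `<=` Bcov C A.
Proof.
move=> AY p Ap.
have [s0 sL] := AY p Ap.
have [l [lL [h1 h2]]] := level_exists s0 sL.
have [m hm] := dyI_cover l p.1.1.
have Sp : strip m l p by split => //.
have QE : Q A (strip m l).
  exists m, l; split => //; split => //.
  by exists p; split => //; split => //; rewrite -p2_half.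
have NE : N (Q A) (strip m l).
  split; first by apply/stripsL_strip.
  have -> : ((@proj1 R) @` strip m l) `&` ((@proj1 R) @` \bigcup_(F in Q A) F) =
      (@proj1 R) @` strip m l.
    apply/setIidPl => x [q qE <-]; exists q => //; exists (strip m l) => //.
  rewrite proj_strip lam_dyI -EFinM lee_fin.
  have := @p2_gt0 R l; lra.
have [F [MF sF]] := max_exists (NQ_stripsL A) _ NE.
by exists F => //; apply: sF.
Qed.

Lemma half_le (t : R) (y : \bar R) : (0 <= y)%E ->
  (t%:E * (2^-1)%:E <= y)%E -> (t%:E <= y + y)%E.
Proof.
case: y => [y| |] //= y0 h; last by rewrite addey // leey.
rewrite -EFinM lee_fin in h; rewrite -EFinD lee_fin; lra.
Qed.

Lemma dbl_le (Phi : R) (x : \bar R) : 2 <= Phi -> (0 <= x)%E ->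
  (x + x <= Phi%:E * x)%E.
Proof.
case: x => [x| |] //= P2 x0.
  rewrite -EFinD -EFinM lee_fin; rewrite lee_fin in x0; nra.
by rewrite addey // mulry gtr0_sg ?mul1e //; lra.
Qed.

Lemma mu_ge0 (A : set (pt R)) : (0 <= mu_out L A)%E.
Proof.
by apply/ereal_infP => _ [J [_ [_ ->]]]; apply: esum_ge0 => j _; rewrite lee_fin; apply/ltW/p2_gt0.
Qed.

Lemma nu_ge0 (A : set (pt R)) : (0 <= nu_out L A)%E.
Proof.
by apply/ereal_infP => _ [J [_ [_ ->]]]; apply: esum_ge0 => j _; rewrite lee_fin; apply/ltW/p2_gt0.
Qed.

Lemma lam_PQ_le_mu A : (lam (PQ A) <= mu_out L A)%E.
Proof.
apply/ereal_infP => _ [J [JL [AJ ->]]].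
have -> : \esum_(j in J) ((2:R) ^ j.2)%:E = \esum_(j in J) lam (dyI j.1 j.2).
  by apply: eq_esum => j _; rewrite lam_dyI.
apply: lam_sub; first by move=> j _; apply: dyI_meas.
  exact: PQ_meas.
rewrite PQ_eq => x [[m l] /= Qml hx].
have [m1 [l1 [l1L [e [p [pp Ap]]]]]] := Qml.
have [e1 e2] := strip_inj e; subst m1 l1.
have [j Jj pj] := AJ p Ap.
have [[hp1 [hp2 hp3]] hp4] := pp.
have [hj1 [hj2 hj3]] := pj.
have lj : l <= j.2.
  have : l - 1 < j.2.
    by rewrite (p2_lt (R:=R)) p2_half; apply: lt_le_trans hp4 hj3.
  lia.
by exists j => //; apply: (dyI_nest lj hp1 hj1).
Qed.

Definition JC (A : set (pt R)) : set (int * int) := [set j | C A (strip j.1 j.2)].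

Lemma JC_disj A (i j : int * int) (x : R) : JC A i -> JC A j ->
  dyI i.1 i.2 x -> dyI j.1 j.2 x -> i = j.
Proof.
move=> [Ni Mi] [Nj Mj] hi hj.
have e : strip i.1 i.2 = strip j.1 j.2.
  case: (dyI_inter hi hj) => /strip_sub sub.
    by symmetry; apply: Mi.
  by apply: Mj.
have [e1 e2] := strip_inj e.
by move: e1 e2; case: i {Ni Mi hi e} => a b; case: j {Nj Mj hj} => c d /= -> ->.
Qed.

Lemma esum_C_le A : (\esum_(j in JC A) ((2:R) ^ j.2)%:E <= lam (PQ A) + lam (PQ A))%E.
Proof.
have mI : forall j : int * int, JC A j -> measurable (dyI j.1 j.2 `&` PQ A).
  by move=> j _; apply: measurableI; [apply: dyI_meas|apply: PQ_meas].
apply: (@le_trans _ _ (\esum_(j in JC A) (lam (dyI j.1 j.2 `&` PQ A) +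
                                          lam (dyI j.1 j.2 `&` PQ A)))).
  apply: le_esum => j [Nj _].
  have [_ h] := (N_strip A j.1 j.2).1 Nj.
  by apply: half_le => //; apply: measure_ge0.
rewrite esumD; try by move=> j _; apply: measure_ge0.
have H : (\esum_(j in JC A) lam (dyI j.1 j.2 `&` PQ A) <= lam (PQ A))%E.
  rewrite -lam_bigcup //; last first.
    move=> i j Ji Jj ne; apply/seteqP; split => // x [[hi _] [hj _]].
    by apply: ne; apply: (JC_disj _ _ _ _ Ji Jj hi hj).
  apply: le_measure; rewrite ?inE.
  - by apply: meas_bigcup.
  - exact: PQ_meas.
  - by move=> x [j _ []].
by apply: leeD.
Qed.

Lemma mu_bound (Phi : R) A : 2 <= Phi -> A `<=` YL L ->
  (mu_out L (Bcov C A) <= Phi%:E * mu_out L A)%E.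
Proof.
move=> P2 AY.
apply: (@le_trans _ _ (\esum_(j in JC A) ((2:R) ^ j.2)%:E)).
  apply: ereal_inf_lbound; exists (JC A); split.
    move=> j [[/stripsL_strip h _] _]; exact: h.
  split => //.
  move=> p [E CE Ep].
  have [m [l [_ eE]]] := NQ_stripsL _ _ (C_sub_N _ _ CE); subst E.
  by exists (m, l).
apply: (le_trans (esum_C_le A)).
apply: (@le_trans _ _ (mu_out L A + mu_out L A)).
  by apply: leeD; apply: lam_PQ_le_mu.
by apply: dbl_le => //; apply: mu_ge0.
Qed.

Lemma Bcov_mono A A' : A `<=` A' -> Bcov C A `<=` Bcov C A'.
Proof.
move=> AA' p [E [NE _] Ep].
have [m [l [lL eE]]] := NQ_stripsL _ _ NE; subst E.
have NE' : N (Q A') (strip m l).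
  have [h1 h2] := (N_strip A m l).1 NE.
  apply/N_strip; split => //; apply: (le_trans h2).
  apply: le_measure; rewrite ?inE.
  - by apply: measurableI; [apply: dyI_meas|apply: PQ_meas].
  - by apply: measurableI; [apply: dyI_meas|apply: PQ_meas].
  - move=> x [hx1 [q [F [m' [l' [l'L [eF [r [rp rA]]]]]] Fq] qx]].
    split => //; rewrite /PQ; exists q => //; exists F => //.
    by exists m', l'; split => //; split => //; exists r; split => //; apply: AA'.
have [F [MF sF]] := max_exists (NQ_stripsL A') _ NE'.
by exists F => //; apply: sF.
Qed.

Lemma tree_sub_strip m l n : tree m l n `<=` strip m l.
Proof.
move=> p [l' [m' [N' [ll' [sub [_ [hx [hs1 [hs2 _]]]]]]]]].
split; first exact: sub.
split; last by apply: (le_trans hs2); rewrite -p2_le.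
by apply: lt_trans hs1; apply: p2_gt0.
Qed.

Lemma Q_stripsL A : Q A `<=` stripsL L.
Proof. by move=> E [m [l [lL [-> _]]]]; exists m, l. Qed.

Lemma nu_le_gen (I : choiceType) (i0 : I) (D : set I) (g : I -> int * int * int)
    (X : set (pt R)) :
  (forall i, D i -> (g i).1.2 <= L) ->
  X `<=` \bigcup_(i in D) tree (g i).1.1 (g i).1.2 (g i).2 ->
  (nu_out L X <= \esum_(i in D) ((2:R) ^ (g i).1.2)%:E)%E.
Proof.
move=> DL XD.
pose s y := xget i0 [set i | D i /\ g i = y].
have sP : forall y, (g @` D) y -> D (s y) /\ g (s y) = y.
  move=> y [i Di gi]; rewrite /s; apply: (xgetPex i0 (P:=[set i | D i /\ g i = y])).
  by exists i.
set D' := s @` (g @` D).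
have e : g @` D = g @` D'.
  apply/seteqP; split.
    by move=> y hy; exists (s y); [exists y|exact: (sP y hy).2].
  by move=> _ [_ [y hy <-] <-]; rewrite (sP y hy).2.
apply: (@le_trans _ _ (\esum_(y in g @` D) ((2:R) ^ y.1.2)%:E)).
  apply: ereal_inf_lbound; exists (g @` D); split.
    by move=> _ [i Di <-]; apply: DL.
  split => //.
  by move=> p /XD [i Di pi]; exists (g i) => //; exists i.
rewrite e esum_image.
  apply: esum_sub.
    by move=> _ [y hy <-]; exact: (sP y hy).1.
  by move=> x _; rewrite lee_fin; apply/ltW/p2_gt0.
move=> a b /set_mem [y1 h1 <-] /set_mem [y2 h2 <-].
by rewrite (sP y1 h1).2 (sP y2 h2).2 => ->.
Qed.

Definition Fj (A0 : set (pt R)) (j : int * int * int) : set (set (pt R)) :=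
  [set E | Q A0 E /\ E `<=` strip j.1.1 j.1.2].
Definition Mj (A0 : set (pt R)) (j : int * int * int) : set (int * int) :=
  [set q | Mcoll (Fj A0 j) (strip q.1 q.2)].
Definition par (n l l' : int) : int := xget 0 [set M | dyI n (- l) `<=` dyI M (- l')].

Lemma parP n l l' : l' <= l -> dyI n (- l) `<=` dyI (par n l l') (- l').
Proof.
move=> ll'; rewrite /par.
apply: (xgetPex 0 (P := [set M | dyI n (- l) `<=` dyI M (- l')])).
by apply: dyI_parent; rewrite lerN2.
Qed.

Lemma Fj_stripsL A0 j : Fj A0 j `<=` stripsL L.
Proof. by move=> E [QE _]; apply: Q_stripsL QE. Qed.

Lemma inner_bound A0 (j : int * int * int) : j.1.2 <= L ->
  ~ N (Q A0) (strip j.1.1 j.1.2) ->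
  (\esum_(q in Mj A0 j) ((2:R) ^ q.2)%:E + \esum_(q in Mj A0 j) ((2:R) ^ q.2)%:E
     <= ((2:R) ^ j.1.2)%:E)%E.
Proof.
move=> jL nN.
have E1 : \esum_(q in Mj A0 j) ((2:R) ^ q.2)%:E =
    lam (\bigcup_(q in Mj A0 j) dyI q.1 q.2).
  rewrite lam_bigcup.
  - by apply: eq_esum => q _; rewrite lam_dyI.
  - by move=> q _; apply: dyI_meas.
  move=> q q' [Fq Mq] [Fq' Mq'] ne; apply/seteqP; split => // x [hx hx'].
  exfalso; apply: ne.
  have e : strip q.1 q.2 = strip q'.1 q'.2.
    case: (dyI_inter hx hx') => /strip_sub sub.
      by symmetry; apply: Mq.
    by apply: Mq'.
  have [e1 e2] := strip_inj e.
  by move: e1 e2; case: q {Fq Mq hx e} => a b; case: q' {Fq' Mq' hx'} => c d /= -> ->.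
have E2 : (lam (\bigcup_(q in Mj A0 j) dyI q.1 q.2) <=
    lam (dyI j.1.1 j.1.2 `&` PQ A0))%E.
  apply: le_measure; rewrite ?inE.
  - by apply: meas_bigcup => q _; apply: dyI_meas.
  - by apply: measurableI; [apply: dyI_meas|apply: PQ_meas].
  move=> x [q [[QE sub] _] hx]; split.
    by apply: (strip_sub.1 sub).
  by rewrite PQ_eq; exists q.
have E3 : (lam (dyI j.1.1 j.1.2 `&` PQ A0) < ((2:R) ^ j.1.2)%:E * (2^-1)%:E)%E.
  rewrite ltNge; apply/negP => h; apply: nN; apply/N_strip; split => //.
rewrite E1.
have hz := le_lt_trans E2 E3.
set X := \bigcup_(q in Mj A0 j) dyI q.1 q.2 in hz *.
have z0 : (0 <= lam X)%E by apply: measure_ge0.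
move: hz z0; case: (lam X) => [z| |] //= hz z0.
rewrite -EFinD lee_fin; rewrite -EFinM lte_fin in hz; rewrite lee_fin in z0; lra.
Qed.

Lemma key A0 V W : V `<=` A0 -> W `&` Bcov C A0 = set0 ->
  (nu_out L V + nu_out L W * (2^-1)%:E <= nu_out L (V `|` W))%E.
Proof.
move=> VA WB.
apply/ereal_infP => _ [J [JL [VWJ ->]]].
pose c (j : int * int * int) := ((2:R) ^ j.1.2)%:E.
pose B := [set j : int * int * int | N (Q A0) (strip j.1.1 j.1.2)].
have c0 : forall j, (0 <= c j)%E by move=> j; rewrite lee_fin; apply/ltW/p2_gt0.
rewrite (esumID B); last by move=> j _; apply: c0.
set cin := \esum_(j in J `&` B) _.
set cout := \esum_(j in J `&` ~` B) _.
have hW : (nu_out L W <= cout)%E.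
  apply: (nu_le_gen _ (0, 0, 0) (J `&` ~` B) id W).
    by move=> j [Jj _]; apply: JL.
  move=> w Ww; have [j Jj wj] := VWJ w (or_intror Ww).
  exists j => //; split => // Bj.
  have [F [MF sF]] := max_exists (NQ_stripsL A0) _ Bj.
  have : (W `&` Bcov C A0) w.
    split => //; exists F => //; apply: sF; exact: tree_sub_strip wj.
  by rewrite WB.
pose h := \esum_(j in J `&` ~` B) \esum_(q in Mj A0 j) ((2:R) ^ q.2)%:E.
have h0 : (0 <= h)%E.
  by apply: esum_ge0 => j _; apply: esum_ge0 => q _; rewrite lee_fin; apply/ltW/p2_gt0.
have hh : (h + h <= cout)%E.
  rewrite /h -esumD; last 2 first.
  - by move=> j _; apply: esum_ge0 => q _; rewrite lee_fin; apply/ltW/p2_gt0.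
  - by move=> j _; apply: esum_ge0 => q _; rewrite lee_fin; apply/ltW/p2_gt0.
  apply: le_esum => j [Jj nBj]; apply: inner_bound => //; exact: JL.
pose D := ((J `&` B) `*`` (fun _ => [set ((0:int), (0:int))])) `|`
          ((J `&` ~` B) `*`` Mj A0).
pose g (k : (int * int * int) * (int * int)) : int * int * int :=
  if `[< B k.1 >] then k.1 else (k.2.1, k.2.2, par k.1.2 k.1.1.2 k.2.2).
have hV : (nu_out L V <= \esum_(k in D) c (g k))%E.
  apply: (nu_le_gen _ ((0, 0, 0), (0, 0)) D g V).
    move=> [j q] [[[Jj Bj] _]|[[Jj nBj] Mq]]; rewrite /g /=.
      by rewrite asboolT //; apply: JL.
    rewrite asboolF //=.
    have [[_ sub] _] := Mq.
    have := dyI_sub_le (strip_sub.1 sub); have := JL j Jj; simpl; lia.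
  move=> v Vv; have [j Jj vj] := VWJ v (or_introl Vv).
  have [Bj|nBj] := pselect (B j).
    exists (j, (0, 0)); first by left.
    by rewrite /g /= asboolT.
  move: vj => [l' [m' [N' [ll' [sub [subn tl]]]]]].
  have [tl1 [tl2 [tl3 tl4]]] := tl.
  have v0 : 0 < v.1.2 by apply: lt_trans tl2; apply: p2_gt0.
  have Qv : Q A0 (strip m' l').
    exists m', l'; split; first by have := JL j Jj; lia.
    split => //; exists v; split; last exact: VA.
    by split; [split|rewrite -p2_half].
  have Fv : Fj A0 j (strip m' l') by split => //; apply/strip_sub.
  have [G [MG sG]] := max_exists (Fj_stripsL A0 j) _ Fv.
  have [a [b [bL eG]]] := Fj_stripsL _ _ _ MG.1; subst G.
  exists (j, (a, b)); first by right.
  rewrite /g /= asboolF //.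
  have sGd := strip_sub.1 sG.
  have l'b := dyI_sub_le sGd.
  have bl : b <= j.1.2 by have [[_ s2] _] := MG; apply: (dyI_sub_le (strip_sub.1 s2)).
  have hp := parP j.2 j.1.2 b bl.
  exists l', m', N'; split => //; split => //; split => //.
  rewrite /=.
  have top := @dyI_top R j.2 (- j.1.2).
  apply: (dyI_nest _ (hp _ top) (subn _ top)).
  by rewrite lerN2.
have E1 : \esum_(k in D) c (g k) = (cin + h)%E.
  rewrite (esumID [set k | B k.1]); last by move=> k _; apply: c0.
  have e1 : D `&` [set k | B k.1] = (J `&` B) `*`` (fun _ => [set ((0:int), (0:int))]).
    apply/seteqP; split.
      by move=> [j q] [[]//[[Jj nBj] _] /= Bj].
    by move=> [j q] [[Jj Bj] e]; split => //; left.
  have e2 : D `&` ~` [set k | B k.1] = (J `&` ~` B) `*`` Mj A0.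
    apply/seteqP; split.
      by move=> [j q] [[[[Jj Bj] _]|//] /= nBj].
    by move=> [j q] [[Jj nBj] Mq]; split => //; right.
  rewrite e1 e2; congr (_ + _)%E.
    transitivity (\esum_(i in J `&` B) \esum_(q in [set ((0:int), (0:int))]) c (g (i, q))).
      rewrite esum_esum; last by move=> *; apply: c0.
      by apply: eq_esum => -[j q].
    by apply: eq_esum => j [Jj Bj]; rewrite esum_set1 ?c0 // /g /= asboolT.
  transitivity (\esum_(i in J `&` ~` B) \esum_(q in Mj A0 i) c (g (i, q))).
    rewrite esum_esum; last by move=> *; apply: c0.
    by apply: eq_esum => -[j q].
  apply: eq_esum => j [Jj nBj]; apply: eq_esum => q _.
  by rewrite /g /= asboolF.
rewrite E1 in hV.
apply: (@arith1 R _ _ _ h) => //.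
- exact: nu_ge0.
- exact: nu_ge0.
- by apply: esum_ge0 => j _; apply: c0.
Qed.

Lemma part2 (K : R) (Ac : set (set (pt R))) (D : set (pt R)) : 2 <= K ->
  caratheodory (YL L) (nu_out L) Ac K -> D `<=` YL L ->
  D `&` Bcov C (\bigcup_(E in Ac) E) = set0 ->
  caratheodory (YL L) (nu_out L) (Ac `|` [set D]) K.
Proof.
move=> K2 [H1 [H2 H3]] DY DB.
set A0 := \bigcup_(E in Ac) E in DB *.
have A0Y : A0 `<=` YL L by move=> p [E AE Ep]; apply: (H1 _ AE _ Ep).
have A0B := cover_A _ A0Y.
have disjD : forall E, Ac E -> E `&` D = set0.
  move=> E AE; apply/seteqP; split => // p [Ep Dp].
  have : (D `&` Bcov C A0) p by split => //; apply: A0B; exists E.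
  by rewrite DB.
split.
  by move=> E [AE|->]; [exact: H1|exact: DY].
split.
  move=> E F [AE|eE] [AF|eF] ne.
  - exact: H2.
  - by rewrite eF; apply: disjD.
  - by rewrite eE setIC; apply: disjD.
  - by exfalso; apply: ne; rewrite eE eF.
move=> U UY.
have [AD|nAD] := pselect (Ac D).
  have -> : Ac `|` [set D] = Ac.
    by apply/seteqP; split => E; [case=> // ->|left].
  exact: H3.
rewrite (esumID Ac); last by move=> *; apply: nu_ge0.
have e1 : (Ac `|` [set D]) `&` Ac = Ac.
  by apply/seteqP; split => E; [case|move=> AE; split => //; left].
have e2 : (Ac `|` [set D]) `&` ~` Ac = [set D].
  apply/seteqP; split => E.
    by move=> [[AE|->] nAE].
  by move=> ->; split => //; right.
rewrite e1 e2 esum_set1; last exact: nu_ge0.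
have e3 : U `&` \bigcup_(E in Ac `|` [set D]) E = (U `&` A0) `|` (U `&` D).
  by rewrite bigcup_setU bigcup_set1 setIUr.
rewrite e3.
apply: (@arith2 R K _ (nu_out L (U `&` A0))) => //.
- by apply: esum_ge0 => *; apply: nu_ge0.
- exact: nu_ge0.
- exact: nu_ge0.
- exact: H3.
apply: (key A0).
  by move=> p [].
apply/seteqP; split => // p [[_ Dp] Bp].
have : (D `&` Bcov C A0) p by [].
by rewrite DB.
Qed.

End Main.

Theorem lemma4p6 (R : realType) (L : int) (Phi K : R) :
  2 <= Phi -> 2 <= K ->
  canopy (@YL R L) (@mu_out R L) (@nu_out R L) (@stripsL R L) (@Ccov R L) Phi K.
Proof.
move=> P2 K2; split.
  split.
    move=> A AY; split.
      by move=> E [[]].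
    split.
      exact: (Mcoll_disj (NQ_stripsL R L A)).
    split.
      exact: cover_A.
    exact: mu_bound.
  by move=> A A' AA' _; apply: Bcov_mono.
by move=> Ac D HAc DY DB; apply: part2.
Qed.
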